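(* Let $D$ be a dendrite of finite length with respect to its metric $d$, let $f\colon D\to D$ be continuous, and let $E\subseteq D$ be a connected set with $\limsup_{n\to\infty}\operatorname{diam} f^n(E)>0$. Then: (1) There exists a least nonnegative integer $n_0$ such that $f^{n_0}(E)\cap f^{n_0+k}(E)\ne\emptyset$ for some positive integer $k$. (2) Let $k$ be any positive integer with $f^{n_0}(E)\cap f^{n_0+k}(E)\ne\emptyset$. Then the sets $K_i=\bigcup_{j=0}^\infty f^{n_0+i+jk}(E)$, $i\in\{0,1,\dots,k-1\}$, are connected, $f(K_i)=K_{i+1}$ for $i\in\{0,\dots,k-2\}$, and $f(K_{k-1})\subseteq K_0$. (3) The set $\operatorname{Orb}_f(f^{n_0}(E))$ has finitely many components $L_0,L_1,\dots,L_{r-1}$, where $r$ divides $k$, which can be numbered so that $L_0\supseteq K_0\supseteq f^{n_0}(E)$, $f(L_j)=L_{j+1}$ for $j\in\{0,\dots,r-2\}$ and $f(L_{r-1})\subseteq L_0$; moreover $L_j=\bigcup_{\ell=0}^{k/r-1}K_{j+\ell r}$ for every $j\in\{0,\dots,r-1\}$. (4) $\operatorname{Orb}_f(E)$ is the disjoint union $E\sqcup f(E)\sqcup\dots\sqcup f^{n_0-1}(E)\sqcup L_0\sqcup L_1\sqcup\dots\sqcup L_{r-1}$.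
   Context: A dendrite is a locally connected continuum containing no simple closed curve. Standing convention: the metric $d$ on $D$ is convex (for any $x,y$ there is $z$ with $d(x,z)=d(z,y)=d(x,y)/2$) and compatible with the topology; $D$ has finite length means its one-dimensional Hausdorff measure $\mathcal H^1_d(D)$ is finite. $\operatorname{Orb}_f(A)=\bigcup_{n\ge0}f^n(A)$. *)

(* Defs.v *)
From HB Require Import structures.
From mathcomp Require Import all_boot all_order all_algebra.
From mathcomp Require Import all_classical all_reals all_analysis.
Set Implicit Arguments. Unset Strict Implicit. Unset Printing Implicit Defensive.
Import Order.TTheory GRing.Theory Num.Theory.
Import numFieldNormedType.Exports.
Local Open Scope classical_set_scope.
Local Open Scope ring_scope.

Section Defs.
Variables (R : realType) (T : topologicalType).

Definition compatible_metric (d : T -> T -> R) : Prop :=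
  [/\ (forall x y, 0 <= d x y),
      (forall x y, d x y = 0 <-> x = y),
      (forall x y, d x y = d y x),
      (forall x y z, d x z <= d x y + d y z) &
      (forall (x : T) (A : set T),
          nbhs x A <-> exists2 e : R, 0 < e & [set y | d x y < e] `<=` A)].

Definition convex_metric (d : T -> T -> R) : Prop :=
  forall x y, exists z, d x z = d x y / 2 /\ d z y = d x y / 2.

(* diameter of a set (diam of the empty set is 0), extended-real valued *)
Definition diam (d : T -> T -> R) (A : set T) : \bar R :=
  ereal_sup ([set 0%E] `|` [set (d x y)%:E | x in A & y in A]).

Definition hausdorff1_delta (d : T -> T -> R) (delta : R) (A : set T) : \bar R :=
  ereal_inf [set (\sum_(0 <= i <oo) diam d (U i))%E | U in
    [set U : nat -> set T | A `<=` \bigcup_i U i /\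
                            forall i, (diam d (U i) <= delta%:E)%E]].

Definition hausdorff1 (d : T -> T -> R) (A : set T) : \bar R :=
  ereal_sup [set hausdorff1_delta d delta A | delta in [set delta : R | 0 < delta]].

Definition locally_connected_space : Prop :=
  forall (x : T) (U : set T), nbhs x U ->
    exists V : set T, [/\ open V, connected V, V x & V `<=` U].

Definition simple_closed_curve (S : set T) : Prop :=
  exists g : R -> T,
    [/\ {within `[0, 1], continuous g},
        g 0 = g 1,
        (forall s t : R, 0 <= s < 1 -> 0 <= t < 1 -> g s = g t -> s = t) &
        S = g @` `[0, 1]].

Definition dendrite : Prop :=
  [/\ [set: T] !=set0, compact [set: T], connected [set: T],
      locally_connected_space &
      forall S : set T, ~ simple_closed_curve S].

Definition fiter (f : T -> T) (n : nat) (A : set T) : set T := iter n f @` A.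

Definition orbit_set (f : T -> T) (A : set T) : set T :=
  \bigcup_(n in [set: nat]) fiter f n A.

End Defs.

Definition Kset (T : topologicalType) (f : T -> T) (E : set T) (n0 k i : nat) : set T :=
  \bigcup_(j in [set: nat]) fiter f (n0 + i + j * k) E.

(* Main.v *)
Require Import Defs.
From HB Require Import structures.
From mathcomp Require Import all_boot all_order all_algebra.
From mathcomp Require Import all_classical all_reals all_analysis.
From mathcomp Require Import ring lra.
From mathcomp Require Import measurable_realfun.
From mathcomp Require Import zify.
Import Order.TTheory GRing.Theory Num.Theory.
Import numFieldNormedType.Exports.
Local Open Scope classical_set_scope.
Local Open Scope ring_scope.


Section Meas.
Variables (R : realType) (T : topologicalType) (d : T -> T -> R).
Hypothesis d0 : forall x y, 0 <= d x y.
Hypothesis dsym : forall x y, d x y = d y x.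
Hypothesis dtri : forall x y z, d x z <= d x y + d y z.
Hypothesis dz : forall x y, d x y = 0 -> x = y.

Lemma diam_ge0 A : (0 <= diam d A)%E.
Proof. by apply: ereal_sup_ubound; left. Qed.

Lemma diam_ub A x y : A x -> A y -> ((d x y)%:E <= diam d A)%E.
Proof. by move=> Ax Ay; apply: ereal_sup_ubound; right; exists x => //; exists y. Qed.

Lemma cover_exists (L delta : R) : (hausdorff1 d setT < L%:E)%E -> 0 < delta ->
  exists U : nat -> set T, [/\ setT `<=` \bigcup_i U i,
    (forall i, (diam d (U i) <= delta%:E)%E) &
    (\sum_(0 <= i <oo) diam d (U i) < L%:E)%E].
Proof.
move=> HL hd.
have : (hausdorff1_delta d delta setT < L%:E)%E.
  by apply: le_lt_trans HL; apply: ereal_sup_ubound; exists delta.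
by move=> /ereal_inf_lt [_ [U [HU1 HU2] <-] HUL]; exists U; split.
Qed.

Lemma near_all_seq (A : eqType) (P : A -> nat -> Prop) (s : seq A) :
  (forall p, p \in s -> \forall j \near \oo, P p j) ->
  \forall j \near \oo, forall p, p \in s -> P p j.
Proof.
elim: s => [|a s IH] H; first by apply: nearW => j p.
have h1 := H a (mem_head _ _).
have h2 := IH (fun p ps => H p (@mem_behead _ (a :: s) p ps)).
apply: filterS2 h1 h2 => j Ha Hs p; rewrite inE => /predU1P[->//|]; exact: Hs.
Qed.

Lemma near_inv_lt (e : R) : 0 < e -> \forall j \near \oo, j.+1%:R^-1 < e.
Proof.
move=> e0; apply: filterS (nbhs_infty_ge (Num.truncn e^-1)) => j hj.
have h1 := truncnS_gt e^-1.
rewrite -(invrK e) ltf_pV2 ?posrE ?invr_gt0 //.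
apply: lt_le_trans h1 _; rewrite ler_nat ltnS //.
Qed.

Lemma limn_einf_ge (u : (\bar R)^nat) (c : \bar R) :
  (\forall j \near \oo, (c <= u j)%E) -> (c <= limn_einf u)%E.
Proof.
move=> [N _ hN]; rewrite limn_einf_lim; apply: lime_ge; first exact: is_cvg_einfs.
apply: filterS (nbhs_infty_ge N) => n hn.
apply: le_ereal_inf_tmp => _ [m /= hm <-]; apply: hN => /=.
exact: leq_trans hn hm.
Qed.

Lemma limn_einf_le (u : (\bar R)^nat) (c : \bar R) :
  (forall j, (u j <= c)%E) -> (limn_einf u <= c)%E.
Proof.
move=> hu; rewrite limn_einf_lim; apply: lime_le; first exact: is_cvg_einfs.
apply: nearW => n; apply: le_trans (hu n).
by apply: ereal_inf_lbound; exists n => /=.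
Qed.


Lemma sphere_few (x : T) (L a b : R) (K : nat) :
  (hausdorff1 d setT < L%:E)%E -> a < b ->
  2 * L < K.+1%:R * (b - a) ->
  exists2 r, a < r < b & forall s : seq T, uniq s ->
    all (fun p => d x p == r) s -> (size s <= K)%N.
Proof.
move=> HL ab HK; apply: contrapT => Hn.
have bad r : a < r < b -> exists s : seq T,
    [/\ uniq s, all (fun p => d x p == r) s & (K < size s)%N].
  move=> hr; apply: contrapT => hn; apply: Hn; exists r => // s us hs.
  by rewrite leqNgt; apply/negP => ks; apply: hn; exists s.
have [U hU] := choice (fun j => @cover_exists L (j.+1%:R^-1) HL
  (ltac:(by rewrite invr_gt0 ltr0n))).
pose D j i := fine (diam d (U j i)).
have hD j i : diam d (U j i) = (D j i)%:E.
  rewrite /D fineK // ge0_fin_numE ?diam_ge0 //.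
  have [_ h _] := hU j; apply: le_lt_trans (h i) _; exact: ltry.
pose c j i := d x (xget x (U j i)).
pose J j i : set R := `[c j i - D j i, c j i + D j i]%classic.
have hJ j i p : U j i p -> J j i (d x p).
  move=> Up; have Uy : U j i (xget x (U j i)).
    by case: xgetP => // nP; case: (nP p).
  rewrite /J /c /=; move: Uy; set y := xget x (U j i) => Uy.
  have := @diam_ub (U j i) _ _ Uy Up; rewrite hD lee_fin => hyp.
  have h1 := dtri x p y; have h2 := dtri x y p; rewrite (dsym p y) in h1.
  by rewrite in_itv /=; apply/andP; split; lra.
pose g j (t : R) : \bar R := (\sum_(0 <= i <oo) (\1_(J j i) t)%:E)%E.
have mJ j i : measurable (J j i) by exact: measurable_itv.
have mZ : measurable (`]a, b[%classic : set R) by exact: measurable_itv.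
have mind j i : measurable_fun `]a, b[%classic (fun t : R => (@EFin R (\1_(J j i) t))).
  by apply/measurable_EFinP; exact: measurable_indic.
have ind0 j i t : (0 <= ((\1_(J j i) t)%:E : \bar R))%E.
  by rewrite lee_fin indicE; case: (_ \in _).
have mg j : measurable_fun `]a, b[%classic (g j).
  by apply: ge0_emeasurable_sum => // k t _ _.
have g0 j t : (0 <= g j t)%E by apply: nneseries_ge0 => n _ _.
have hint j : (\int[lebesgue_measure]_(t in `]a, b[) g j t <= (2 * L)%:E)%E.
  rewrite /g integral_nneseries //; try (by move=> n; exact: mind);
    try (by move=> n t _; exact: ind0).
  rewrite (eq_eseriesr (fun i _ => integral_indic lebesgue_measure mZ (mJ j i))).
  apply: (@le_trans _ _ (\sum_(0 <= i <oo) ((2 * D j i)%:E))%E).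
    apply: lee_nneseries => [i _ _|i _]; first exact: measure_ge0.
    apply: le_trans (measureIl _ _ _) _; [exact: mJ|exact: mZ|].
    have := lebesgue_measure_itv `[c j i - D j i, c j i + D j i].
    rewrite /J /= => ->.
    have D0 : 0 <= D j i by rewrite fine_ge0 // diam_ge0.
    case: ifP => _; last by rewrite lee_fin; lra.
    by rewrite -EFinD lee_fin; lra.
  rewrite (eq_eseriesr (fun i _ => EFinM 2 (D j i))) nneseriesZl; last first.
    by move=> i _; rewrite lee_fin fine_ge0 // diam_ge0.
  rewrite (eq_eseriesr (fun i _ => esym (hD j i))) EFinM lee_pmul2l //.
  by have [_ _ /ltW] := hU j.
have hpt t : `]a, b[%classic t -> ((K.+1)%:R%:E <= limn_einf (fun j => g j t))%E.
  rewrite /= in_itv /= => ht.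
  have [s [us hs ks]] := bad t ht.
  apply: limn_einf_ge.
  have ev : \forall j \near \oo, forall p, p \in s -> forall q, q \in s ->
      p != q -> j.+1%:R^-1 < d p q.
    apply: near_all_seq => p ps; apply: near_all_seq => q qs.
    have [<-|pq] := eqVneq p q; first by apply: nearW => j /negP.
    have dpq : 0 < d p q.
      by rewrite lt0r d0 andbT; apply/eqP => /dz /eqP; rewrite (negbTE pq).
    by apply: filterS (@near_inv_lt _ dpq) => j hj _.
  apply: filterS ev => j hsep.
  pose io p := xget 0%N (fun i => U j i p).
  have Uio p : U j (io p) p.
    rewrite /io; case: xgetP => // nP.
    have [hc _ _] := hU j; have [i _ Ui] := hc p Logic.I.
    by case: (nP i).
  have inj : {in s &, injective io}.
    move=> p q ps qs e; apply/eqP; apply: contraT => pq.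
    have := hsep p ps q qs pq.
    have Uq : U j (io p) q by rewrite e; exact: Uio.
    have := @diam_ub (U j (io p)) p q (Uio p) Uq; rewrite hD lee_fin => h1 h2.
    have [_ h3 _] := hU j; have := h3 (io p); rewrite hD lee_fin => h4.
    suff : d p q < d p q by rewrite ltxx.
    exact: le_lt_trans h1 (le_lt_trans h4 h2).
  pose u := map io s.
  have uu : uniq u by rewrite map_inj_in_uniq.
  pose M := (\max_(i <- u) i).+1.
  have uM i : i \in u -> (i < M)%N.
    by move=> iu; rewrite ltnS; exact: (leq_bigmax_seq (F:=id) (P:=xpredT) i iu).
  apply: le_trans (nneseries_lim_ge M _); last by move=> n _ _; exact: ind0.
  rewrite sumEFin lee_fin.
  apply: (@le_trans _ _ (size u)%:R); first by rewrite ler_nat size_map.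
  have -> : (size u)%:R = \sum_(0 <= i < M) ((i \in u) : nat)%:R :> R.
    rewrite -natr_sum; congr (_%:R).
    rewrite (eq_bigr (fun i => if i \in u then 1 else 0)%N); last first.
      by move=> i _; case: (i \in u).
    rewrite -big_mkcond sum1_count -size_filter.
    apply/esym; apply: perm_size; apply: uniq_perm => //.
      by apply: filter_uniq; exact: iota_uniq.
    move=> i; rewrite mem_filter mem_index_iota.
    by case iu: (i \in u) => //=; rewrite uM.
  apply: ler_sum => i _; case: (boolP (i \in u)) => iu; last first.
    by rewrite /= indicE; case: (_ \in _).
  rewrite indicE mem_set //.
  move/mapP: iu => [p ps ->].
  have /eqP <- := allP hs p ps.
  exact: hJ (Uio p).
have mlim : measurable_fun `]a, b[%classic (fun t => limn_einf (fun j => g j t)).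
  rewrite /limn_einf; apply: measurableT_comp => //.
  apply: measurable_fun_limn_esup => n; apply: measurableT_comp => //.
have Hf := fatou lebesgue_measure mZ mg (fun n t _ => g0 n t).
have H1 : ((K.+1%:R)%:E * lebesgue_measure (`]a, b[%classic : set R) <=
    \int[lebesgue_measure]_(t in `]a, b[) limn_einf (fun j => g j t))%E.
  rewrite -integral_cst //; apply: ge0_le_integral => //.
  - by move=> t _; rewrite lee_fin.
have H2 := @limn_einf_le _ _ hint.
have := le_trans H1 (le_trans Hf H2).
rewrite lebesgue_measure_itv /= lte_fin ab -EFinD -EFinM lee_fin.
lra.
Qed.

End Meas.

Section Topo.
Variables (R : realType) (T : topologicalType) (d : T -> T -> R).
Hypothesis dtri : forall x y z, d x z <= d x y + d y z.
Hypothesis dnbhs : forall (x : T) (A : set T),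
  nbhs x A <-> exists2 e : R, 0 < e & [set y | d x y < e] `<=` A.
Hypothesis dsym : forall x y, d x y = d y x.

Lemma open_of (U : set T) : (forall y, U y -> nbhs y U) -> open U.
Proof. by move=> h; rewrite openE => y Uy; exact: h. Qed.

Lemma open_lt (z : T) (r : R) : open [set y | d z y < r].
Proof.
apply: open_of => y /= hy; apply/dnbhs; exists (r - d z y); first by lra.
by move=> w /= hw; have := dtri z y w; lra.
Qed.

Lemma open_gt (z : T) (r : R) : open [set y | r < d z y].
Proof.
apply: open_of => y /= hy; apply/dnbhs; exists (d z y - r); first by lra.
by move=> w /= hw; have := dtri z w y; rewrite (dsym w y); lra.
Qed.

Lemma sphere_cross (A : set T) (z p q : T) (r : R) : connected A -> A p -> A q ->
  d z p < r -> r < d z q -> exists2 y, A y & d z y = r.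
Proof.
move=> cA Ap Aq hp hq; apply: contrapT => hn.
have hne y : A y -> d z y != r.
  by move=> Ay; apply/eqP => e; apply: hn; exists y.
have e : A `&` [set y | d z y < r] = A `&` ~` [set y | r < d z y].
  apply/seteqP; split => y [Ay hy]; split => //; rewrite /= in hy *.
    by move=> h; lra.
  have := hne y Ay; rewrite neq_lt => /orP[//|h]; by case: hy.
have hB : A `&` [set y | d z y < r] = A.
  apply: cA.
  - by exists p.
  - by exists [set y | d z y < r] => //; exact: open_lt.
  - exists (~` [set y | r < d z y]); last exact: e.
    by rewrite closedC; exact: open_gt.
have : (A `&` [set y | d z y < r]) q by rewrite hB.
by move=> [_ /=]; lra.
Qed.

End Topo.

Lemma iter_cont (T : topologicalType) (f : T -> T) n :
  continuous f -> continuous (iter n f).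
Proof.
move=> fc; elim: n => [|n IH] x /=; first exact: cvg_id.
exact: (continuous_comp (IH x) (fc _)).
Qed.

Lemma fiter_connected (T : topologicalType) (f : T -> T) (E : set T) n :
  continuous f -> connected E -> connected (fiter f n E).
Proof.
move=> fc cE; apply: connected_continuous_connected => //.
exact/continuous_subspaceT/iter_cont.
Qed.

Lemma inc_lt (h : nat -> nat) : (forall i, (h i < h i.+1)%N) ->
  forall i j, (i < j)%N -> (h i < h j)%N.
Proof.
move=> hh i; elim=> [//|j IH]; rewrite ltnS leq_eqVlt => /orP[/eqP ->//|ij].
exact: ltn_trans (IH ij) (hh j).
Qed.

Lemma limsup_pos (R : realType) (u : (\bar R)^nat) : (0 < limn_esup u)%E ->
  exists2 e : R, 0 < e & forall N, exists2 n, (N <= n)%N & (e%:E < u n)%E.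
Proof.
move=> hl.
have [e e0 he] : exists2 e : R, 0 < e & (e%:E < limn_esup u)%E.
  move: hl; case: (limn_esup u) => [l| |] //.
    by rewrite lte_fin => l0; exists (l / 2); rewrite ?lte_fin; lra.
  by move=> _; exists 1 => //; exact: ltry.
exists e => // N.
have : (e%:E < esups u N)%E.
  apply: lt_le_trans he _; rewrite limn_esup_lim.
  apply: lime_le; first exact: is_cvg_esups.
  by apply: filterS (nbhs_infty_ge N) => n hn; exact: nonincreasing_esups.
by move=> /ereal_sup_gt [_ [n /= Nn <-] hn]; exists n.
Qed.

Lemma exists_meet (R : realType) (T : topologicalType) (d : T -> T -> R)
  (f : T -> T) (E : set T) :
  compatible_metric d -> compact [set: T] -> (hausdorff1 d [set: T] < +oo)%E ->
  continuous f -> connected E ->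
  (0 < limn_esup (fun n => diam d (fiter f n E)))%E ->
  exists n k, (0 < k)%N /\ fiter f n E `&` fiter f (n + k) E !=set0.
Proof.
move=> [d0 dz dsym dtri dnbhs] cT HH fc cE hls.
apply: contrapT => Hn.
have disj n m : (n < m)%N -> fiter f n E `&` fiter f m E = set0.
  move=> nm; rewrite -subset0 => y [An Am]; apply: Hn.
  exists n, (m - n)%N; split; first by rewrite subn_gt0.
  by exists y; split => //; rewrite subnKC // ltnW.
have [e e0 he] := @limsup_pos _ _ hls.
have hw N : exists w : nat * (T * T), [/\ (N <= w.1)%N, fiter f w.1 E w.2.1,
    fiter f w.1 E w.2.2 & e < d w.2.1 w.2.2].
  have [n Nn hn] := he N.
  have [y [/= ->|[p Ap [q Aq <-]]] hy] := ereal_sup_gt hn.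
    by move: hy; rewrite lte_fin; lra.
  by exists (n, (p, q)); split => //; rewrite -lte_fin.
have [w hw'] := choice hw.
pose nu N := (w N).1.
pose pp N := (w N).2.1.
pose qq N := (w N).2.2.
have [z [_ cz]] := cT (pp @ \oo) _ filterT.
have hcl N : exists m, (N <= m)%N /\ d z (pp m) < e / 8.
  have hB : nbhs z [set y | d z y < e / 8].
    by apply/dnbhs; exists (e / 8) => //; lra.
  have hA : (pp @ \oo) (pp @` [set m | (N <= m)%N]).
    by apply: filterS (nbhs_infty_ge N) => m hm; exists m.
  have [y [[m Nm <-] hy]] := cz _ _ hA hB.
  by exists m.
have [L HL] : exists L : R, (hausdorff1 d [set: T] < L%:E)%E.
  move: HH; case: (hausdorff1 d [set: T]) => [l _| //| _].
    by exists (l + 1); rewrite lte_fin; lra.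
  by exists 0; exact: ltNyr.
pose K := Num.truncn (16 * L / e).
have HK : 2 * L < K.+1%:R * (e / 4 - e / 8).
  have := truncnS_gt (16 * L / e); rewrite -/K ltr_pdivrMr // => h.
  nra.
have e84 : e / 8 < e / 4 by lra.
have [r hr hS] := @sphere_few R T d d0 dsym dtri (fun x y => proj1 (dz x y)) z L
  (e / 8) (e / 4) K HL e84 HK.
have [chi hchi] := choice hcl.
pose fix ms i := if i is i'.+1 then chi (nu (ms i')).+1 else chi 0%N.
pose idx i := nu (ms i).
have hms i : d z (pp (ms i)) < e / 8 by case: i => [|i] /=; [exact: (hchi 0%N).2|exact: (hchi _).2].
have idx_lt i : (idx i < idx i.+1)%N.
  rewrite /idx /=; have [h1 _] := hchi (nu (ms i)).+1.
  have [h2 _ _ _] := hw' (chi (nu (ms i)).+1).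
  exact: leq_trans h1 h2.
have hy i : exists y, fiter f (idx i) E y /\ d z y = r.
  have [_ Ap Aq hpq] := hw' (ms i).
  have hp : d z (pp (ms i)) < r by have := hms i; lra.
  have hq : r < d z (qq (ms i)).
    have := dtri (pp (ms i)) z (qq (ms i)); rewrite (dsym _ z).
    have := hms i; rewrite /pp /qq; lra.
  have [y Ay hyr] := @sphere_cross R T d dtri dnbhs dsym _ _ _ _ _
    (@fiter_connected T f E _ fc cE) Ap Aq hp hq.
  by exists y.
have [y hy'] := choice hy.
suff : (size (map y (iota 0 K.+1)) <= K)%N by rewrite size_map size_iota ltnn.
apply: hS.
- rewrite map_inj_in_uniq ?iota_uniq // => i j _ _ eij; apply/eqP.
  apply: contraT => ij.
  have H3 a b : (a < b)%N -> y a = y b -> False.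
    move=> ab eab; have := disj _ _ (@inc_lt idx idx_lt _ _ ab).
    have [Ya _] := hy' a; have [Yb _] := hy' b.
    by rewrite -subset0 => /(_ (y a)); apply; split => //; rewrite eab.
  have [h|h|h] := ltngtP i j.
  - by case: (H3 _ _ h eij).
  - by case: (H3 _ _ h (esym eij)).
  - by rewrite h eqxx in ij.
- by apply/allP => p /mapP [i _ ->]; apply/eqP; have [_ ->] := hy' i.
Qed.


Lemma iter_cont2 (T : topologicalType) (f : T -> T) n :
  continuous f -> continuous (iter n f).
Proof.
move=> fc; elim: n => [|n IH] x /=; first exact: cvg_id.
exact: (continuous_comp (IH x) (fc _)).
Qed.

Lemma fiter_conn (T : topologicalType) (f : T -> T) (E : set T) n :
  continuous f -> connected E -> connected (fiter f n E).
Proof.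
move=> fc cE; apply: connected_continuous_connected => //.
exact/continuous_subspaceT/iter_cont2.
Qed.

Lemma fiterS (T : topologicalType) (f : T -> T) n (A : set T) :
  f @` fiter f n A = fiter f n.+1 A.
Proof.
apply/seteqP; split => y.
  by move=> [_ [x Ax <-] <-]; exists x.
by move=> [x Ax <-]; exists (iter n f x) => //; exists x.
Qed.

Lemma fiterD (T : topologicalType) (f : T -> T) m n (A : set T) :
  fiter f m (fiter f n A) = fiter f (m + n) A.
Proof.
apply/seteqP; split => y.
  by move=> [_ [x Ax <-] <-]; exists x => //; rewrite iterD.
by move=> [x Ax <-]; exists (iter n f x); [exists x|rewrite iterD].
Qed.

Lemma fiter_shift (T : topologicalType) (f : T -> T) (A : set T) n k j :
  fiter f n A `&` fiter f (n + k) A !=set0 ->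
  fiter f (j + n) A `&` fiter f (j + n + k) A !=set0.
Proof.
move=> [y [[x Ax ex] [x' Ax' ex']]]; exists (iter j f y); split.
  by exists x => //; rewrite iterD ex.
by exists x' => //; rewrite -addnA iterD ex'.
Qed.

Lemma chain_connected (T : topologicalType) (B : nat -> set T) :
  (forall j, connected (B j)) -> (forall j, B j `&` B j.+1 !=set0) ->
  connected (\bigcup_(j in [set: nat]) B j).
Proof.
move=> cB hB.
pose C n := \bigcup_(j in [set j | (j <= n)%N]) B j.
have cC n : connected (C n).
  elim: n => [|n IH].
    rewrite /C (_ : \bigcup_(j in _) B j = B 0%N) //.
    apply/seteqP; split => y.
      by move=> [j /= jn Bj]; move: jn Bj; rewrite leqn0 => /eqP ->.
    by move=> By; exists 0%N.
  rewrite (_ : C n.+1 = C n `|` B n.+1).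
    apply: connectedU => //; have [y [y1 y2]] := hB n.
    by exists y; split => //; exists n => /=.
  apply/seteqP; split => y.
    move=> [j /= ]; rewrite leq_eqVlt => /orP[/eqP -> ?|]; first by right.
    by rewrite ltnS => jn Bj; left; exists j.
  move=> [[j /= jn Bj]|Bn].
    by exists j => //=; apply: leqW.
  by exists n.+1 => /=.
rewrite (_ : \bigcup_(j in _) B j = \bigcup_(n in [set: nat]) C n).
  apply: bigcup_connected => //.
  have [y [y0 _]] := hB 0%N; exists y => n _; exists 0%N => //=.
apply/seteqP; split => y.
  by move=> [j _ Bj]; exists j => //; exists j => /=.
by move=> [n _ [j _ Bj]]; exists j.
Qed.

Section Comb.
Variables (T : topologicalType) (f : T -> T) (E : set T).
Hypothesis fc : continuous f.
Hypothesis cE : connected E.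
Variables (n0 k0 : nat).
Hypothesis k0pos : (0 < k0)%N.
Hypothesis hm0 : fiter f n0 E `&` fiter f (n0 + k0) E !=set0.

Lemma Kconn k i : fiter f n0 E `&` fiter f (n0 + k) E !=set0 ->
  connected (Kset f E n0 k i).
Proof.
move=> hk; apply: chain_connected => [j|j]; first exact: fiter_conn.
have := @fiter_shift _ f E n0 k (i + j * k)%N hk.
have e2 : (i + j * k + n0 + k = n0 + i + j.+1 * k)%N by rewrite mulSn; lia.
have e1 : (i + j * k + n0 = n0 + i + j * k)%N by lia.
by rewrite e2 e1.
Qed.

Lemma KS k i : f @` Kset f E n0 k i = Kset f E n0 k i.+1.
Proof.
apply/seteqP; split => y.
  move=> [x [j _ hx] <-]; exists j => //.
  rewrite (_ : (n0 + i.+1 + j * k = (n0 + i + j * k).+1)%N); last by lia.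
  by rewrite -fiterS; exists x.
move=> [j _]; rewrite (_ : (n0 + i.+1 + j * k = (n0 + i + j * k).+1)%N); last by lia.
by rewrite -fiterS => -[x hx <-]; exists x => //; exists j.
Qed.

Lemma Klast k : (0 < k)%N -> f @` Kset f E n0 k k.-1 `<=` Kset f E n0 k 0.
Proof.
move=> k0' y [x [j _ hx] <-]; exists j.+1 => //.
rewrite (_ : (n0 + 0 + j.+1 * k = (n0 + k.-1 + j * k).+1)%N); last by lia.
by rewrite -fiterS; exists x.
Qed.

Let O := orbit_set f (fiter f n0 E).
Let B m := fiter f (m + n0) E.

Lemma OE : O = \bigcup_(m in [set: nat]) B m.
Proof.
by apply/seteqP; split => y [m _ h]; exists m => //; move: h; rewrite /B fiterD.
Qed.

Lemma Bconn m : connected (B m). Proof. exact: fiter_conn. Qed.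

Lemma BO m : B m `<=` O. Proof. by rewrite OE => y h; exists m. Qed.

Lemma fB m : f @` B m = B m.+1.
Proof. by rewrite /B fiterS addSn. Qed.

Lemma fO C : C `<=` O -> f @` C `<=` O.
Proof.
rewrite OE => hC _ [x Cx <-]; have [m _ Bx] := hC x Cx.
by exists m.+1 => //; rewrite -fB; exists x.
Qed.

Let p0 : T := proj1_sig (cid hm0).
Let hp0 : fiter f n0 E p0 := (proj2_sig (cid hm0)).1.
Let pt m := iter m f p0.
Let comp x := connected_component O x.
Let gam m := comp (pt m).

Lemma ptB m : B m (pt m).
Proof. by case: hp0 => x Ex ex; exists x => //; rewrite iterD ex. Qed.

Lemma ptO m : O (pt m). Proof. exact: BO (ptB m). Qed.

Lemma compB m x : B m x -> comp x = gam m.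
Proof.
move=> Bx; apply: same_connected_component.
exact: (connected_component_max Bx (@BO m) (Bconn m)) (ptB m).
Qed.

Lemma gam_step m m' : gam m = gam m' -> gam m.+1 = gam m'.+1.
Proof.
move=> e; apply: same_connected_component.
have Cm' : gam m (pt m') by rewrite e; exact: connected_component_refl (ptO m').
have sub : f @` gam m `<=` comp (pt m.+1).
  apply: connected_component_max.
  - by exists (pt m) => //; exact: connected_component_refl (ptO m).
  - by apply: fO; exact: connected_component_sub.
  - apply: connected_continuous_connected; first exact: component_connected.
    exact: continuous_subspaceT.
by apply: sub; exists (pt m').
Qed.

Lemma gam_add t m m' : gam m = gam m' -> gam (m + t) = gam (m' + t).
Proof. by elim: t => [|t IH] e; rewrite ?addn0 // !addnS; apply: gam_step; exact: IH. Qed.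

Lemma gam_k k m : fiter f n0 E `&` fiter f (n0 + k) E !=set0 -> gam (m + k) = gam m.
Proof.
move=> hk; have [y [y1 y2]] := @fiter_shift _ f E n0 k m hk.
have B1 : B m y by [].
have B2 : B (m + k) y by rewrite /B (_ : (m + k + n0 = m + n0 + k)%N) //; lia.
by rewrite -(@compB _ _ B1) -(@compB _ _ B2).
Qed.

Let rP t := (0 < t)%N && `[< gam t = gam 0 >].
Let exr : exists t, rP t.
Proof.
exists k0; rewrite /rP k0pos /=; apply/asboolP.
by have := @gam_k k0 0 hm0; rewrite add0n.
Qed.
Let r := ex_minn exr.

Lemma r_spec : (0 < r)%N /\ gam r = gam 0.
Proof. by rewrite /r; case: ex_minnP => t /andP[t0 /asboolP h] _. Qed.

Lemma r_min t : (0 < t)%N -> gam t = gam 0 -> (r <= t)%N.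
Proof.
move=> t0 h; rewrite /r; case: ex_minnP => t' _; apply.
by rewrite /rP t0; apply/asboolP.
Qed.

Lemma gam_r m : gam (m + r) = gam m.
Proof.
elim: m => [|m IH]; first by rewrite add0n; exact: r_spec.2.
by rewrite addSn; apply: gam_step.
Qed.

Lemma gam_mod m : gam m = gam (m %% r)%N.
Proof.
rewrite {1}(divn_eq m r) addnC; elim: (m %/ r)%N => [|q IH]; first by rewrite mul0n addn0.
by rewrite mulSn addnCA addnC gam_r.
Qed.

Lemma gam_inj i j : (i < r)%N -> (j < r)%N -> gam i = gam j -> i = j.
Proof.
have H a b : (a < b)%N -> (b < r)%N -> gam a = gam b -> False.
  move=> ab br e; have := @gam_add (r - b)%N _ _ e.
  rewrite (subnKC (ltnW br)) r_spec.2 => e2.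
  have h0 : (0 < a + (r - b))%N by lia.
  have := r_min _ h0 e2; lia.
move=> ir jr e; case: (ltngtP i j) => // h; first by case: (H _ _ h jr e).
by case: (H _ _ h ir (esym e)).
Qed.

Lemma gam_eq m m' : gam m = gam m' <-> (m %% r = m' %% r)%N.
Proof.
have r0 := r_spec.1.
split => [e|e]; last by rewrite gam_mod e -gam_mod.
by apply: gam_inj; rewrite ?ltn_pmod // -!gam_mod.
Qed.

Lemma L_char j x : gam j x <-> exists2 m, (m %% r = j %% r)%N & B m x.
Proof.
split.
  move=> h; have Ox : O x by exact: connected_component_sub h.
  move: (Ox); rewrite OE => -[m _ Bm]; exists m => //.
  apply/gam_eq; rewrite -(@compB _ _ Bm); exact/esym/same_connected_component.
move=> [m e Bm]; have h : comp x x := connected_component_refl (@BO _ _ Bm).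
by rewrite (@compB _ _ Bm) in h; move/gam_eq: e => <-.
Qed.

Lemma comp_struct : exists (r : nat) (L : nat -> set T),
  [/\ (0 < r)%N,
   [/\ (forall j : nat, (j < r)%N ->
          exists2 x, orbit_set f (fiter f n0 E) x &
            L j = connected_component (orbit_set f (fiter f n0 E)) x),
       (forall x, orbit_set f (fiter f n0 E) x ->
          exists2 j : nat, (j < r)%N &
            connected_component (orbit_set f (fiter f n0 E)) x = L j) &
       (forall j j' : nat, (j < r)%N -> (j' < r)%N -> j <> j' ->
          L j `&` L j' = set0)],
   [/\ fiter f n0 E `<=` L 0%N,
       (forall j : nat, (j.+1 < r)%N -> f @` L j = L j.+1) &
       f @` L r.-1 `<=` L 0%N],
   (forall k : nat, (0 < k)%N -> fiter f n0 E `&` fiter f (n0 + k) E !=set0 ->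
      [/\ (r %| k)%N,
          Kset f E n0 k 0 `<=` L 0%N &
          forall j : nat, (j < r)%N ->
            L j = \bigcup_(l in [set l : nat | (l < k %/ r)%N])
                    Kset f E n0 k (j + l * r)%N]) &
   [/\ orbit_set f (fiter f n0 E) = \bigcup_(j in [set j : nat | (j < r)%N]) L j &
       (forall j x, L j x -> exists m, fiter f (m + n0) E x)]].
Proof.
have [r0 _] := r_spec.
have Lmod j x : gam j x -> exists2 m, (m %% r = j %% r)%N & B m x.
  by move/L_char.
have Lmod' j x m : (m %% r = j %% r)%N -> B m x -> gam j x.
  by move=> e Bm; apply/L_char; exists m.
have gsame j y : gam j y -> gam j = comp y.
  by move=> h; apply: same_connected_component.
exists r, gam; split => //.
- split.
  + by move=> j _; exists (pt j) => //; exact: ptO.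
  + move=> x Ox.
    have [m _ Bm] : (\bigcup_(m in [set: nat]) B m) x by rewrite -OE.
    exists (m %% r)%N; first exact: ltn_pmod.
    exact: etrans (@compB _ _ Bm) (gam_mod m).
  + move=> j j' jr j'r jj'; rewrite -subset0 => y [hj hj'].
    apply: jj'; apply: gam_inj => //.
    by rewrite (gsame _ _ hj) (gsame _ _ hj').
- split.
  + by move=> x hx; apply: (Lmod' _ _ 0%N).
  + move=> j jr; apply/seteqP; split => y.
      move=> [x /Lmod [m e Bm] <-]; apply: (Lmod' _ _ m.+1).
        by rewrite -addn1 -modnDml e modnDml addn1.
      by rewrite -fB; exists x.
    move=> /Lmod [m e Bm]; move: e; rewrite (modn_small jr).
    case: m Bm => [|m] Bm; first by rewrite mod0n.
    move=> e; move: Bm; rewrite -fB => -[x Bx <-]; exists x => //.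
    apply: (Lmod' _ _ m) => //; apply/eqP; rewrite -(eqn_modDr 1) !addn1.
    by rewrite e modn_small.
  + move=> _ [x /Lmod [m e Bm] <-]; apply: (Lmod' _ _ m.+1).
      by rewrite -addn1 -modnDml e modnDml addn1 prednK // modnn mod0n.
    by rewrite -fB; exists x.
- move=> k k0' hk.
  have rk : (r %| k)%N.
    have := @gam_k k 0%N hk; rewrite add0n => /gam_eq; rewrite mod0n => e.
    by rewrite /dvdn e.
  split => //.
  + move=> y [j _ hy]; apply: (Lmod' _ _ (j * k)%N).
      by rewrite mod0n; apply/eqP; rewrite -/(dvdn r (j * k)) dvdn_mull.
    by move: hy; rewrite /B addn0 addnC.
  + move=> j jr; apply/seteqP; split => y.
      move=> /Lmod [m e Bm]; move: e; rewrite (modn_small jr) => e.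
      have kr0 : (0 < k %/ r)%N by rewrite divn_gt0 // dvdn_leq.
      pose q := (m %/ r)%N.
      pose l := (q %% (k %/ r))%N.
      pose t := (q %/ (k %/ r))%N.
      exists l; first by rewrite /= /l ltn_pmod.
      exists t => //.
      have e1 : m = (q * r + j)%N by rewrite /q -e -divn_eq.
      have e2 : q = (t * (k %/ r) + l)%N by rewrite /t /l -divn_eq.
      have e3 : k = (k %/ r * r)%N by rewrite divnK.
      move: Bm; rewrite /B.
      have -> : (m + n0 = n0 + (j + l * r) + t * k)%N.
        rewrite e1 e2 {2}e3 mulnDl mulnA; lia.
      by [].
    move=> [l _ [t _ hy]]; apply: (Lmod' _ _ (j + l * r + t * k)%N).
      have e3 : k = (k %/ r * r)%N by rewrite divnK.
      have -> : (j + l * r + t * k = (l + t * (k %/ r)) * r + j)%N.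
        by rewrite {1}e3 mulnDl mulnA; lia.
      by rewrite modnMDl.
    rewrite /B; have -> : (j + l * r + t * k + n0 = n0 + (j + l * r) + t * k)%N by lia.
    exact: hy.
- split.
  + apply/seteqP; split => y.
      rewrite -/O OE => -[m _ Bm]; exists (m %% r)%N; first exact: ltn_pmod.
      by apply: (Lmod' _ _ m) => //; rewrite modn_mod.
    by move=> [j _ hy]; exact: connected_component_sub hy.
  + by move=> j x /Lmod [m _ Bm]; exists m.
Qed.

End Comb.


Theorem lemma13 (R : realType) (T : topologicalType) (d : T -> T -> R)
  (f : T -> T) (E : set T) :
  compatible_metric d -> convex_metric d -> dendrite R T ->
  (hausdorff1 d [set: T] < +oo)%E ->
  continuous f -> connected E ->
  (0 < limn_esup (fun n => diam d (fiter f n E)))%E ->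
  let meets n k := fiter f n E `&` fiter f (n + k) E !=set0 in
  exists n0 : nat,
    [/\ (* (1) n0 is the least such integer *)
        (exists2 k : nat, (0 < k)%N & meets n0 k),
        (forall m k : nat, (0 < k)%N -> meets m k -> (n0 <= m)%N),
        (* (2) *)
        (forall k : nat, (0 < k)%N -> meets n0 k ->
           [/\ forall i : nat, (i < k)%N -> connected (Kset f E n0 k i),
               forall i : nat, (i.+1 < k)%N ->
                 f @` Kset f E n0 k i = Kset f E n0 k i.+1 &
               f @` Kset f E n0 k k.-1 `<=` Kset f E n0 k 0]) &
        (* (3) and (4) *)
        exists (r : nat) (L : nat -> set T),
          [/\ (0 < r)%N,
              (* L_0, ..., L_{r-1} are exactly the components of Orb_f(f^{n0}(E)) *)
              [/\ (forall j : nat, (j < r)%N ->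
                 exists2 x, orbit_set f (fiter f n0 E) x &
                   L j = connected_component (orbit_set f (fiter f n0 E)) x),
              (forall x, orbit_set f (fiter f n0 E) x ->
                 exists2 j : nat, (j < r)%N &
                   connected_component (orbit_set f (fiter f n0 E)) x = L j) &
              (forall j j' : nat, (j < r)%N -> (j' < r)%N -> j <> j' ->
                 L j `&` L j' = set0)],
              [/\ fiter f n0 E `<=` L 0%N,
              (forall j : nat, (j.+1 < r)%N -> f @` L j = L j.+1) &
              f @` L r.-1 `<=` L 0%N],
              (forall k : nat, (0 < k)%N -> meets n0 k ->
                 [/\ (r %| k)%N,
                     fiter f n0 E `<=` Kset f E n0 k 0,
                     Kset f E n0 k 0 `<=` L 0%N &
                     forall j : nat, (j < r)%N ->
                       L j = \bigcup_(l in [set l : nat | (l < k %/ r)%N])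
                               Kset f E n0 k (j + l * r)]) &
              (* (4) Orb_f(E) is the disjoint union *)
              [/\ orbit_set f E =
                    (\bigcup_(i in [set i : nat | (i < n0)%N]) fiter f i E)
                    `|` (\bigcup_(j in [set j : nat | (j < r)%N]) L j),
                  (forall i i' : nat, (i < n0)%N -> (i' < n0)%N -> i <> i' ->
                     fiter f i E `&` fiter f i' E = set0) &
                  (forall i j : nat, (i < n0)%N -> (j < r)%N ->
                     fiter f i E `&` L j = set0)]]].
Proof.
move=> cm cvx [_ cT _ _ _] HH fc cE hls meets.
have hex := @exists_meet R T d f E cm cT HH fc cE hls.
pose P n := `[< exists k, (0 < k)%N /\ meets n k >].
have exP : exists n, P n.
  have [n [k [k0 hk]]] := hex; exists n; apply/asboolP; exists k; split => //.
case: (ex_minnP exP) => n0 /asboolP [k0 [k0pos hk0]] minn0.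
have hmin m k : (0 < k)%N -> meets m k -> (n0 <= m)%N.
  by move=> k0' hk; apply: minn0; apply/asboolP; exists k.
exists n0.
have [r [L [r0 hcomp hdyn hK [horb hLB]]]] := @comp_struct T f E fc cE n0 k0 k0pos hk0.
split.
- by exists k0.
- exact: hmin.
- move=> k kpos hk; split.
  + by move=> i _; exact: (@Kconn T f E fc cE n0 k kpos k i hk).
  + by move=> i _; exact: (@KS T f E n0 k kpos k i).
  + exact: (@Klast T f E n0 k kpos k kpos).
- exists r, L; split => //.
  + move=> k kpos hk; have [h1 h2 h3] := hK k kpos hk; split => //.
    move=> x hx; exists 0%N => //.
    by rewrite addn0 mul0n addn0.
  + split.
    * rewrite -horb; apply/seteqP; split => y.
        move=> [n _ hy]; case: (ltnP n n0) => h; first by left; exists n.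
        right; exists (n - n0)%N => //; rewrite fiterD subnK //.
      move=> [[i _ hy]|[m _ hy]]; first by exists i.
      by exists (m + n0)%N => //; rewrite -fiterD.
    * move=> i i' hi hi' ii'; rewrite -subset0 => y [h1 h2].
      have H a b : (a < b)%N -> (a < n0)%N -> fiter f a E y -> fiter f b E y -> False.
        move=> ab an ha hb.
        have hm : fiter f a E `&` fiter f (a + (b - a))%N E !=set0.
          by exists y; split => //; rewrite subnKC // ltnW.
        have hp : (0 < b - a)%N by rewrite subn_gt0.
        have := hmin a (b - a)%N hp hm; lia.
      case: (ltngtP i i') => h.
      - exact: H h hi h1 h2.
      - exact: H h hi' h2 h1.
      - by apply: ii'.
    * move=> i j hi hj; rewrite -subset0 => y [h1 h2].
      have [m hm] := hLB j y h2.
      have hm' : fiter f i E `&` fiter f (i + (m + n0 - i))%N E !=set0.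
        by exists y; split => //; rewrite subnKC //; lia.
      have hp : (0 < m + n0 - i)%N by lia.
      have := hmin i (m + n0 - i)%N hp hm'; lia.
Qed.
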